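(* There is an absolute constant $\delta>0$ such that for every constant $c_1\in(0,0.01)$, every sufficiently large $a$, every set $A$ of size $a$ and every $r\in\{0,1\}^A$, at least one of the functions $x\mapsto h^{(-,0)}(x\oplus r)$ and $x\mapsto h^{(-,1)}(x\oplus r)$ on $\{0,1\}^A$ has distance at least $\delta$ from every monotone function on $\{0,1\}^A$.
   Context: On $\{0,1\}^A$ with $|A|=a$: $h^{(-,0)}(z)=1$ iff $|z|>a/2+c_1\sqrt a$, and $h^{(-,1)}(z)=1$ iff $|z|<a/2-c_1\sqrt a$, where $|z|$ is Hamming weight. $\oplus$ is coordinatewise XOR. Distance between functions is the fraction of points of $\{0,1\}^A$ (uniform measure) on which they differ; monotone means $f(x)\le f(y)$ whenever $x\le y$ coordinatewise. *)

(* Defs.v *)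
From mathcomp Require Import all_boot.
From Stdlib Require Import Reals.
Set Implicit Arguments. Unset Strict Implicit. Unset Printing Implicit Defensive.
Local Open Scope R_scope.

Definition cube (A : finType) := {ffun A -> bool}.

Definition hweight (A : finType) (z : cube A) : nat := #|[set i | z i]|.

Definition xorc (A : finType) (x r : cube A) : cube A := [ffun i => xorb (x i) (r i)].

Definition hm0 (c1 : R) (A : finType) (z : cube A) : bool :=
  if Rlt_dec ((INR #|A|) / 2 + c1 * sqrt (INR #|A|))%R (INR (hweight z)) then true else false.

Definition hm1 (c1 : R) (A : finType) (z : cube A) : bool :=
  if Rlt_dec (INR (hweight z)) ((INR #|A|) / 2 - c1 * sqrt (INR #|A|))%R then true else false.

Definition fdist (A : finType) (f g : cube A -> bool) : R :=
  (INR #|[set x : cube A | f x != g x]| / INR #|{: cube A}|)%R.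

Definition monotone (A : finType) (f : cube A -> bool) : Prop :=
  forall x y : cube A, (forall i, x i ==> y i) -> f x ==> f y.

(* Main.v *)
Require Import Defs.
From mathcomp Require Import all_boot.
From Stdlib Require Import Reals Lra Lia.
From Stdlib Require ZArith.
From mathcomp Require all_order all_algebra zify ring.
Module Aux.
Import ssrnat all_order all_algebra zify ring.
Import Order.TTheory GRing.Theory Num.Theory.

Lemma sum_sub (r : seq nat) (P Q : pred nat) (F : nat -> nat) :
  (forall i, P i -> Q i) -> (\sum_(i <- r | P i) F i <= \sum_(i <- r | Q i) F i)%N.
Proof.
move=> PQ; rewrite [X in (_ <= X)%N](bigID P) /=.
apply: leq_trans (leq_addr _ _); apply: eq_leq; apply: eq_bigl => i.
by case Pi: (P i); [rewrite PQ | rewrite andbF].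
Qed.

Lemma sum_bin n : (\sum_(0 <= j < n.+1) 'C(n, j) = 2 ^ n)%N.
Proof.
have := expnDn 1 1 n; rewrite big_mkord => ->.
by apply: eq_bigr => i _; rewrite !exp1n !muln1.
Qed.

Lemma sum_sym m : (\sum_(0 <= j < m.+1 | m <= 2 * j) 'C(m, j) =
   \sum_(0 <= j < m.+1 | 2 * j <= m) 'C(m, j))%N.
Proof.
rewrite big_nat_rev /= add0n.
apply: congr_big_nat => // i.
  move=> /andP[_ Hi]; rewrite subSS; lia.
by move=> /andP[_ /andP[_ Hi]]; rewrite subSS bin_sub // -ltnS.
Qed.

Lemma sum_half m : (2 ^ m <= 2 * \sum_(0 <= j < m.+1 | m <= 2 * j) 'C(m, j))%N.
Proof.
rewrite -sum_bin (bigID (fun j => 2 * j <= m)%N) /= mul2n -addnn.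
rewrite {1}sum_sym; apply: leq_add => //.
apply: sum_sub => i; lia.
Qed.

Lemma sum_half' m : (2 ^ m <= 2 * \sum_(0 <= j < m.+1 | 2 * j <= m) 'C(m, j))%N.
Proof. by rewrite -sum_sym sum_half. Qed.

Lemma binS2 k : ((k.+1) * 'C(k.*2.+2, k.+1) = 2 * (k.*2.+1) * 'C(k.*2, k))%N.
Proof.
have h1 := mul_bin_diag k.*2.+1 k. rewrite /= in h1.
have h2 : 'C(k.*2.+2, k.+1) = 2 * 'C(k.*2.+1, k.+1).
  rewrite binS.
  have : 'C(k.*2.+1, k) = 'C(k.*2.+1, k.+1).
    rewrite -(@bin_sub (k.*2.+1) k.+1); last lia.
    f_equal; lia.
  move=> ->; lia.
rewrite h2 mulnCA -h1; lia.
Qed.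

Lemma cb k : ('C(k.*2, k) ^ 2 * (k.*2.+1) <= 16 ^ k)%N.
Proof.
elim: k => [|k IH]; first by rewrite bin0.
have H := binS2 k.
set X := 'C(k.*2, k) in IH H *; set Y := 'C(k.*2.+2, k.+1) in H *.
rewrite doubleS.
have : ((k.+1)^2 * (Y ^ 2 * (k.*2.+3)) <= (k.+1)^2 * 16 ^ k.+1)%N.
  have -> : ((k.+1)^2 * (Y ^ 2 * (k.*2.+3)) = 4 * (k.*2.+1) * (k.*2.+3) * (X^2 * k.*2.+1))%N.
    have -> : ((k.+1)^2 * (Y ^ 2 * (k.*2.+3)) = ((k.+1) * Y)^2 * (k.*2.+3))%N by ring.
    rewrite H; ring.
  rewrite expnS.
  have h : (4 * k.*2.+1 * k.*2.+3 <= (k.+1)^2 * 16)%N by lia.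
  apply: leq_trans (leq_mul h IH) _; by rewrite -mulnA -expnS.
by move=> hh; rewrite leq_pmul2l ?expn_gt0 in hh.
Qed.

Lemma bin_mono1 n k : (2 * k < n)%N -> ('C(n, k) <= 'C(n, k.+1))%N.
Proof.
move=> h; have := mul_bin_left n k.
have : (k.+1 <= n - k)%N by lia.
move=> h2 h3; rewrite -(leq_pmul2l (ltn0Sn k)) h3 leq_mul2r; lia.
Qed.

Lemma bin_mono n i j : (i <= j)%N -> (2 * j <= n)%N -> ('C(n, i) <= 'C(n, j))%N.
Proof.
move=> hij; elim: j hij => [|j IH] hij hj.
  by have -> : i = 0%N by lia.
case: (ltngtP i j.+1) => h; try lia.
  apply: (leq_trans (IH _ _)); [lia|lia|apply: bin_mono1; lia].
by rewrite h.
Qed.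

Lemma bin_le_mid n j : ('C(n, j) <= 'C(n, n./2))%N.
Proof.
case: (leqP j n) => hjn; last by rewrite bin_small.
case: (leqP (2 * j) n) => h.
  apply: bin_mono => //; lia.
rewrite -bin_sub //; apply: bin_mono; lia.
Qed.

Lemma cmax m j : ('C(m, j) ^ 2 * m <= 4 ^ m)%N.
Proof.
apply: leq_trans (_ : 'C(m, m./2) ^ 2 * m <= _)%N.
  by rewrite leq_mul2r leq_exp2r // bin_le_mid orbT.
have [o|e] := boolP (odd m).
- have hm : m = (m./2).*2.+1 by rewrite -{1}(odd_double_half m) o.
  set k := m./2 in hm *.
  have H : 'C(k.*2.+2, k.+1) = 2 * 'C(m, k).
    rewrite hm binS.
    have : 'C(k.*2.+1, k) = 'C(k.*2.+1, k.+1).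
      rewrite -(@bin_sub (k.*2.+1) k.+1); last lia.
      f_equal; lia.
    move=> ->; lia.
  have := cb k.+1; rewrite doubleS H.
  have -> : 'C(m, k) = 'C(m, m./2) by [].
  set C := 'C(m, m./2); move=> h.
  have e4 : (4 ^ m = 4 * 16 ^ k)%N by rewrite hm expnS -mul2n expnM.
  rewrite e4.
  rewrite [16 ^ _]expnS in h.
  have : (4 * (C ^ 2 * m) <= 4 * (4 * 16 ^ k))%N.
    have -> : (4 * (4 * 16 ^ k) = 16 * 16 ^ k)%N by rewrite mulnA.
    apply: leq_trans _ h; rewrite hm; nia.
  by move=> hh; rewrite leq_pmul2l in hh.
- have hm : m = (m./2).*2 by rewrite -{1}(odd_double_half m) (negbTE e).
  set k := m./2 in hm *.
  have := cb k; rewrite -hm.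
  have e4 : (4 ^ m = 16 ^ k)%N by rewrite hm -mul2n expnM.
  rewrite e4 => h; apply: leq_trans _ h; rewrite leq_mul2l; lia.
Qed.

Lemma window_bound (N lo w B : nat) (P : pred nat) (F : nat -> nat) :
  (forall j, P j -> lo <= j < lo + w)%N -> (forall j, F j <= B)%N ->
  (\sum_(0 <= j < N | P j) F j <= w * B)%N.
Proof.
move=> HP HF.
apply: (@leq_trans (\sum_(0 <= j < N | lo <= j < lo + w) B)%N).
  apply: (@leq_trans (\sum_(0 <= j < N | P j) B)%N); first exact: leq_sum.
  by apply: sum_sub.
rewrite (big_nat_widen 0 N (N + (lo + w))); last lia.
apply: (@leq_trans (\sum_(0 <= j < N + (lo + w) | lo <= j < lo + w) B)%N).
  by apply: sum_sub => j /andP[].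
rewrite (big_cat_nat _ (n := lo)) //; last lia.
rewrite (big_cat_nat _ (n := lo + w) (m := lo)) //=; last lia.
rewrite big1_seq; last first.
  by move=> j /andP[/andP[h _]]; rewrite mem_index_iota; lia.
rewrite [X in (_ + (_ + X) <= _)%N]big1_seq; last first.
  by move=> j /andP[/andP[_ h]]; rewrite mem_index_iota; lia.
rewrite add0n addn0 big_nat_cond.
apply: (@leq_trans (\sum_(lo <= j < lo + w) B)%N).
  by apply: sum_sub => j /andP[].
  by rewrite sum_nat_const_nat addKn.
rewrite leq_addr //.
Qed.

Local Open Scope ring_scope.
Lemma claimA (m t0 : nat) (t : int) : (400 <= m)%N -> (100 * t0 ^ 2 <= 36 * m)%N ->
  t <= t0%:Z -> - (t0%:Z) <= t ->
  (2 ^ m <= 20 * \sum_(0 <= j < m.+1 | ((2 * j)%:Z - m%:Z <= t)%R) 'C(m, j))%N /\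
  (2 ^ m <= 20 * \sum_(0 <= j < m.+1 | (t < (2 * j)%:Z - m%:Z)%R) 'C(m, j))%N.
Proof.
move=> hm ht0 ht1 ht2.
set C := 'C(m, m./2).
have hC : forall j, ('C(m, j) <= C)%N by move=> j; exact: bin_le_mid.
have hcm := cmax m m./2; rewrite -/C in hcm.
have h1 : (10 * t0 * C <= 6 * 2 ^ m)%N.
  rewrite -(@leq_exp2r _ _ 2) //.
  have -> : ((6 * 2 ^ m) ^ 2 = 36 * 4 ^ m)%N by rewrite expnMn; congr (_ * _)%N; rewrite -expnM mulnC expnM.
  apply: (@leq_trans (36 * (C ^ 2 * m))%N); last by rewrite leq_mul2l hcm orbT.
  have -> : ((10 * t0 * C) ^ 2 = (100 * t0 ^ 2) * C ^ 2)%N by ring.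
  have -> : (36 * (C ^ 2 * m) = (36 * m) * C ^ 2)%N by ring.
  by rewrite leq_mul2r ht0 orbT.
have h2 : (40 * C <= 2 * 2 ^ m)%N.
  rewrite -(@leq_exp2r _ _ 2) //.
  have -> : ((2 * 2 ^ m) ^ 2 = 4 * 4 ^ m)%N by rewrite expnMn; congr (_ * _)%N; rewrite -expnM mulnC expnM.
  apply: (@leq_trans (4 * (C ^ 2 * m))%N); last by rewrite leq_mul2l hcm orbT.
  have -> : ((40 * C) ^ 2 = 1600 * C ^ 2)%N by ring.
  nia.
split.
- have hh := sum_half' m.
  set S := (\sum_(0 <= j < m.+1 | (2 * j <= m)%N) 'C(m, j))%N in hh.
  have hS : (S <= \sum_(0 <= j < m.+1 | ((2 * j)%:Z - m%:Z <= t)%R) 'C(m, j)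
        + \sum_(0 <= j < m.+1 | ((2 * j <= m)%N && (t < (2 * j)%:Z - m%:Z)%R)) 'C(m, j))%N.
    rewrite /S (bigID (fun j => ((2 * j)%:Z - m%:Z <= t)%R)) /=; apply: leq_add.
      by apply: sum_sub => j /andP[].
    apply: sum_sub => j /andP[h /negP h']; rewrite h /=; lia.
  have hW : (\sum_(0 <= j < m.+1 | ((2 * j <= m)%N && (t < (2 * j)%:Z - m%:Z)%R)) 'C(m, j)
      <= (t0 %/ 2 + 2) * C)%N.
    apply: (window_bound _ ((m - t0) %/ 2)%N) => // j /andP[h h']; lia.
  lia.
- have hh := sum_half m.
  set S := (\sum_(0 <= j < m.+1 | (m <= 2 * j)%N) 'C(m, j))%N in hh.
  have hS : (S <= \sum_(0 <= j < m.+1 | (t < (2 * j)%:Z - m%:Z)%R) 'C(m, j)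
        + \sum_(0 <= j < m.+1 | ((m <= 2 * j)%N && ((2 * j)%:Z - m%:Z <= t)%R)) 'C(m, j))%N.
    rewrite /S (bigID (fun j => (t < (2 * j)%:Z - m%:Z)%R)) /=; apply: leq_add.
      by apply: sum_sub => j /andP[].
    apply: sum_sub => j /andP[h /negP h']; rewrite h /=; lia.
  have hW : (\sum_(0 <= j < m.+1 | ((m <= 2 * j)%N && ((2 * j)%:Z - m%:Z <= t)%R)) 'C(m, j)
      <= (t0 %/ 2 + 2) * C)%N.
    apply: (window_bound _ (m %/ 2)%N) => // j /andP[h h']; lia.
  lia.
Qed.

Lemma PoszSum (r : seq nat) (P : pred nat) (F : nat -> nat) :
  Posz (\sum_(i <- r | P i) F i)%N = \sum_(i <- r | P i) Posz (F i).
Proof. by rewrite (big_morph Posz PoszD (erefl (Posz 0))). Qed.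

Lemma pascal_sum n (F : nat -> int) :
  \sum_(0 <= p < n.+2) ('C(n.+1, p)%:Z * F p) =
  \sum_(0 <= p < n.+1) ('C(n, p)%:Z * (F p + F p.+1)).
Proof.
rewrite big_nat_recl // bin0 mul1r.
under eq_bigr do rewrite binS PoszD mulrDl.
rewrite big_split /=.
under [in RHS]eq_bigr do rewrite mulrDr.
rewrite [in RHS]big_split /= addrA; congr (_ + _).
rewrite big_nat_recr //= bin_small // mul0r addr0.
by rewrite [in RHS]big_nat_recl // bin0 mul1r.
Qed.

Lemma sumZ_bin n : \sum_(0 <= p < n.+1) ('C(n, p)%:Z * 1) = (2 ^ n)%N%:Z.
Proof.
under eq_bigr do rewrite mulr1.
by rewrite -PoszSum sum_bin.
Qed.

Lemma variance n : \sum_(0 <= p < n.+1) ('C(n, p)%:Z * ((2 * p)%:Z - n%:Z) ^+ 2) =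
  (n * 2 ^ n)%N%:Z.
Proof.
elim: n => [|n IH]; first by rewrite big_nat1.
rewrite pascal_sum.
have -> : \sum_(0 <= i < n.+1) ('C(n, i)%:Z * (((2 * i)%:Z - n.+1%:Z) ^+ 2 +
     ((2 * i.+1)%:Z - n.+1%:Z) ^+ 2)) =
   \sum_(0 <= i < n.+1) (2 * ('C(n, i)%:Z * ((2 * i)%:Z - n%:Z) ^+ 2) + 2 * ('C(n, i)%:Z * 1)).
  apply: eq_bigr => i _.
  have -> : (2 * i.+1)%:Z = (2 * i)%:Z + 2 by rewrite mulnS PoszD addrC.
  have -> : n.+1%:Z = n%:Z + 1 by rewrite -addn1 PoszD.
  ring.
rewrite big_split /= -!big_distrr /= IH sumZ_bin.
rewrite expnS; apply/eqP; rewrite -!PoszM -PoszD; apply/eqP; congr Posz; ring.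
Qed.

Lemma range_eq (N a b : nat) (F : nat -> nat) : (a <= b)%N -> (b <= N)%N ->
  (\sum_(a <= p < b) F p = \sum_(0 <= p < N | a <= p < b) F p)%N.
Proof.
move=> hab hbN.
rewrite [in RHS](big_cat_nat _ (n := a)) //=; last lia.
rewrite [in RHS](big_cat_nat _ (n := b) (m := a)) //=.
have hA : (\sum_(0 <= i < a | a <= i < b) F i = 0)%N.
  by rewrite big_nat_cond big_pred0 // => i; lia.
have hC : (\sum_(b <= i < N | a <= i < b) F i = 0)%N.
  by rewrite big_nat_cond big_pred0 // => i; lia.
rewrite hA hC add0n addn0 [in RHS]big_nat_cond [in LHS]big_nat_cond.
by apply: eq_bigl => i; rewrite andbb andbT.
Qed.

Lemma range_le_good (N a b : nat) (P : pred nat) (F : nat -> nat) : (a <= b)%N -> (b <= N)%N ->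
  (forall p, a <= p < b -> P p)%N ->
  (\sum_(a <= p < b) F p <= \sum_(0 <= p < N | P p) F p)%N.
Proof.
move=> hab hbN hP; rewrite (@range_eq N a b F hab hbN); apply: sum_sub => p /hP //.
Qed.

Lemma cheb n h r : (r ^ 2 <= n < (r.+1) ^ 2)%N -> (2 * h <= n <= 2 * h + 1)%N ->
  (r.+1 <= h)%N -> (h + r.+1 <= n)%N ->
  (3 * 2 ^ n <= 4 * \sum_(h - r.+1 <= p < h + r.+2) 'C(n, p))%N.
Proof.
move=> hr hh hR1 hR2.
have hn : (0 < n)%N by lia.
set Out := (\sum_(0 <= p < n.+1 | ~~ (h - r.+1 <= p < h + r.+2)%N) 'C(n, p))%N.
have hsplit : (2 ^ n = \sum_(h - r.+1 <= p < h + r.+2) 'C(n, p) + Out)%N.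
  rewrite -sum_bin (bigID (fun p => (h - r.+1 <= p < h + r.+2)%N)) /=.
  by rewrite -range_eq //; lia.
have hOut : (4 * Out <= 2 ^ n)%N.
  have hV := variance n.
  suff H : ((n * 4 * Out)%N%:Z <= (n * 2 ^ n)%N%:Z).
    rewrite lez_nat in H; rewrite -(leq_pmul2l hn); apply: leq_trans H; by rewrite mulnA.
  rewrite -hV (bigID (fun p => (h - r.+1 <= p < h + r.+2)%N)) /=.
  apply: ler_wpDl.
    by apply: sumr_ge0 => i _; apply: mulr_ge0 => //; apply: sqr_ge0.
  rewrite /Out big_distrr /= PoszSum.
  rewrite [X in X <= _]big_nat_cond [X in _ <= X]big_nat_cond.
  apply: ler_sum => i /andP[/andP[_ hi] hout].
  rewrite PoszM mulrC; apply: ler_wpM2l => //.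
  have hx : ((2 * i)%:Z - n%:Z <= - (2 * r + 3)%N%:Z \/ (2 * r + 3)%N%:Z <= (2 * i)%:Z - n%:Z)%R.
    move: hout; rewrite negb_and -!ltnNge => /orP[hx|hx]; lia.
  have h2 : (((2 * r + 3)%N%:Z) ^+ 2 <= ((2 * i)%:Z - n%:Z) ^+ 2)%R.
    case: hx => hx; nia.
  apply: le_trans h2.
  have : (4 * n < (2 * r + 3) ^ 2)%N by nia.
  move=> /ltnW H.
  have -> : ((2 * r + 3)%N%:Z ^+ 2 = ((2 * r + 3) ^ 2)%N%:Z)%R.
    by rewrite expr2 -PoszM expnS expn1.
  rewrite lez_nat; lia.
lia.
Qed.

Lemma sum_const_le (a b v : nat) (F : nat -> nat) : (forall p, a <= p < b -> F p <= v)%N ->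
  (\sum_(a <= p < b) F p <= (b - a) * v)%N.
Proof.
move=> H; rewrite -sum_nat_const_nat big_nat_cond [X in (_ <= X)%N]big_nat_cond.
by apply: leq_sum => i /andP[hi _]; apply: H.
Qed.

Lemma sum_const_ge (a b v : nat) (F : nat -> nat) : (forall p, a <= p < b -> v <= F p)%N ->
  ((b - a) * v <= \sum_(a <= p < b) F p)%N.
Proof.
move=> H; rewrite -sum_nat_const_nat big_nat_cond [X in (_ <= X)%N]big_nat_cond.
by apply: leq_sum => i /andP[hi _]; apply: H.
Qed.

Lemma avg n h d R : (2 * h <= n <= 2 * h + 1)%N -> (d <= R)%N -> (R <= h)%N -> (h + R <= n)%N ->
  ((2 * d + 1) * \sum_(h - R <= p < h + R + 1) 'C(n, p) <=
   (2 * R + 1) * \sum_(h - d <= p < h + d + 1) 'C(n, p))%N.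
Proof.
move=> hh hdR hRh hRn.
set v := 'C(n, h - d).
have hin : forall p, (h - d <= p < h + d + 1)%N -> (v <= 'C(n, p))%N.
  move=> p hp; case: (leqP p h) => hph.
    apply: bin_mono; lia.
  rewrite -(@bin_sub n p); last lia.
  apply: bin_mono; lia.
have hlo : forall p, (h - R <= p < h - d)%N -> ('C(n, p) <= v)%N.
  move=> p hp; apply: bin_mono; lia.
have hhi : forall p, (h + d + 1 <= p < h + R + 1)%N -> ('C(n, p) <= v)%N.
  move=> p hp; rewrite -(@bin_sub n p); last lia.
  apply: bin_mono; lia.
rewrite (big_cat_nat _ (n := h - d)) //=; last lia; last lia.
rewrite (big_cat_nat _ (n := h + d + 1) (m := h - d)) //=; last lia; last lia.
set A := (\sum_(h - R <= i < h - d) 'C(n, i))%N.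
set I := (\sum_(h - d <= i < h + d + 1) 'C(n, i))%N.
set B := (\sum_(h + d + 1 <= i < h + R + 1) 'C(n, i))%N.
have hA : (A <= (R - d) * v)%N.
  apply: leq_trans (@sum_const_le _ _ _ (fun p => 'C(n, p)) hlo) _; rewrite leq_mul2r; apply/orP; right; lia.
have hB : (B <= (R - d) * v)%N.
  apply: leq_trans (@sum_const_le _ _ _ (fun p => 'C(n, p)) hhi) _; rewrite leq_mul2r; apply/orP; right; lia.
have hI : ((2 * d + 1) * v <= I)%N.
  apply: leq_trans _ (@sum_const_ge _ _ _ (fun p => 'C(n, p)) hin); rewrite leq_mul2r; apply/orP; right; lia.
have hA' : ((2 * d + 1) * A <= (R - d) * I)%N.
  apply: leq_trans (leq_mul (leqnn (2 * d + 1)) hA) _.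
  rewrite mulnCA; exact: leq_mul (leqnn _) hI.
have hB' : ((2 * d + 1) * B <= (R - d) * I)%N.
  apply: leq_trans (leq_mul (leqnn (2 * d + 1)) hB) _.
  rewrite mulnCA; exact: leq_mul (leqnn _) hI.
rewrite !mulnDr.
have -> : ((2 * R + 1) * I = (R - d) * I + (2 * d + 1) * I + (R - d) * I)%N.
  rewrite -!mulnDl; congr (_ * _)%N; lia.
lia.
Qed.

Definition goodp (n m E p : nat) : bool :=
  (100%:Z * ((2 * p)%:Z - n%:Z - E%:Z) ^+ 2 <= (36 * m)%N%:Z)%R.

Lemma good_of n m E p x : (n <= m)%N -> (100 <= m)%N -> (100 * E ^ 2 <= m)%N ->
  x = (2 * p)%:Z - n%:Z -> (100 * x ^+ 2 <= (16 * m + 400)%N%:Z)%R ->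
  goodp n m E p.
Proof.
move=> hnm hm hE hx h; rewrite /goodp -hx.
have hE' : (100 * (E%:Z) ^+ 2 <= m%:Z)%R.
  have -> : (E%:Z ^+ 2 = (E ^ 2)%N%:Z)%R by rewrite expr2 -PoszM expnS expn1.
  rewrite -PoszM lez_nat; lia.
have : ((x - E%:Z) ^+ 2 <= 2 * x ^+ 2 + 2 * E%:Z ^+ 2)%R.
  have : (0 <= (x + E%:Z) ^+ 2)%R by apply: sqr_ge0.
  move=> h0; have -> : (2 * x ^+ 2 + 2 * E%:Z ^+ 2 = (x - E%:Z) ^+ 2 + (x + E%:Z) ^+ 2)%R by ring.
  by rewrite lerDl.
move=> h2; nia.
Qed.

Lemma claimB (n m E : nat) : (n <= m)%N -> (100 <= m)%N -> (100 * E ^ 2 <= m)%N ->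
  (2 ^ n <= 50 * \sum_(0 <= p < n.+1 | goodp n m E p) 'C(n, p))%N.
Proof.
move=> hnm hm hE.
set h := n./2.
have hh : (2 * h <= n <= 2 * h + 1)%N.
  rewrite /h -{2 4}(odd_double_half n) -!mul2n; case: (odd n) => /=; lia.
case: (leqP n 49) => hn.
- have h1 : (2 ^ n <= (n.+1) * 'C(n, h))%N.
    rewrite -sum_bin -{2}(subn0 n.+1); apply: sum_const_le => p _; exact: bin_le_mid.
  have h2 : ('C(n, h) <= \sum_(0 <= p < n.+1 | goodp n m E p) 'C(n, p))%N.
    have := @range_le_good n.+1 h h.+1 (goodp n m E) (fun p => 'C(n, p)).
    rewrite big_nat1; apply; try lia.
    move=> p hp; apply: (@good_of n m E p ((2 * p)%:Z - n%:Z)) => //.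
    have -> : p = h by lia.
    have : ((2 * h)%:Z - n%:Z = 0 \/ (2 * h)%:Z - n%:Z = -1)%R by lia.
    case=> ->; rewrite ?expr0n /= ?sqrrN ?expr1n; lia.
  apply: leq_trans h1 _; apply: leq_trans (_ : 50 * 'C(n, h) <= _)%N.
    by rewrite leq_mul2r; apply/orP; right; lia.
  by rewrite leq_mul2l h2 orbT.
- have [hr1 hr2] := Nat.sqrt_spec' n.
  set r := Nat.sqrt n in hr1 hr2.
  have hr : (r ^ 2 <= n < (r.+1) ^ 2)%N by rewrite !expnS !expn0 !muln1; apply/andP; split; lia.
  have hr7 : (7 <= r)%N by nia.
  have hrh : (r.+1 <= h)%N by nia.
  set d := (r %/ 10)%N.
  have hd1 : (10 * d <= r)%N by rewrite /d; lia.
  have hd2 : (r < 10 * d + 10)%N by rewrite /d; lia.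
  have hc := @cheb n h r hr hh hrh ltac:(lia).
  have ha := @avg n h d r.+1 hh ltac:(lia) hrh ltac:(lia).
  have hg : (\sum_(h - d <= p < h + d + 1) 'C(n, p) <=
             \sum_(0 <= p < n.+1 | goodp n m E p) 'C(n, p))%N.
    apply: range_le_good; try lia.
    move=> p hp; apply: (@good_of n m E p ((2 * p)%:Z - n%:Z)) => //.
    have hx : (- (2 * d + 1)%N%:Z <= (2 * p)%:Z - n%:Z <= (2 * d + 1)%N%:Z)%R by lia.
    have : ((2 * p)%:Z - n%:Z) ^+ 2 <= ((2 * d + 1)%N%:Z) ^+ 2 by nia.
    have -> : ((2 * d + 1)%N%:Z ^+ 2 = ((2 * d + 1) ^ 2)%N%:Z)%R by rewrite expr2 -PoszM expnS expn1.
    move=> h3; apply: (le_trans (ler_wpM2l _ h3)) => //.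
    rewrite -PoszM lez_nat; nia.
  have hr' : (r.+2 = r.+1 + 1)%N by lia.
  rewrite hr' addnA in hc.
  set S := (\sum_(0 <= p < n.+1 | goodp n m E p) 'C(n, p))%N in hg *.
  set Rg := (\sum_(h - r.+1 <= p < h + r.+1 + 1) 'C(n, p))%N in hc ha.
  set In := (\sum_(h - d <= p < h + d + 1) 'C(n, p))%N in ha hg.
  have k2 : (4 * (2 * r.+1 + 1) <= 150 * (2 * d + 1))%N by lia.
  have k1 : ((2 * d + 1) * (3 * 2 ^ n) <= (2 * d + 1) * (150 * S))%N.
    apply: (@leq_trans ((2 * d + 1) * (4 * Rg))%N); first by rewrite leq_mul2l hc orbT.
    have -> : ((2 * d + 1) * (4 * Rg) = 4 * ((2 * d + 1) * Rg))%N by ring.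
    apply: (@leq_trans (4 * ((2 * r.+1 + 1) * S))%N).
      rewrite leq_mul2l; apply/orP; right; apply: leq_trans ha _; by rewrite leq_mul2l hg orbT.
    have -> : (4 * ((2 * r.+1 + 1) * S) = (4 * (2 * r.+1 + 1)) * S)%N by ring.
    have -> : ((2 * d + 1) * (150 * S) = (150 * (2 * d + 1)) * S)%N by ring.
    by rewrite leq_mul2r k2 orbT.
  rewrite leq_pmul2l in k1; last lia.
  lia.
Qed.

Lemma claimA' (m : nat) (t : int) : (400 <= m)%N -> (100 * t ^+ 2 <= (36 * m)%N%:Z)%R ->
  (2 ^ m <= 20 * \sum_(0 <= j < m.+1 | ((2 * j)%:Z - m%:Z <= t)%R) 'C(m, j))%N /\
  (2 ^ m <= 20 * \sum_(0 <= j < m.+1 | (t < (2 * j)%:Z - m%:Z)%R) 'C(m, j))%N.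
Proof.
move=> hm ht.
case Ht: t => [k|k]; rewrite -Ht.
- have hk : (100 * k ^ 2 <= 36 * m)%N by rewrite Ht in ht; nia.
  apply: (@claimA m k t); lia.
- have hk : (100 * k.+1 ^ 2 <= 36 * m)%N by rewrite Ht NegzE sqrrN in ht; nia.
  apply: (@claimA m k.+1 t); rewrite ?Ht ?NegzE; lia.
Qed.

Lemma analytic (n m K : nat) : (n <= m)%N -> (400 <= m)%N -> (n + m < 2 * K)%N ->
  (100 * (2 * K - (n + m)) ^ 2 <= m)%N ->
  (2 ^ (n + m) <= 1000 * \sum_(0 <= p < n.+1) ('C(n, p) *
     minn (\sum_(0 <= j < m.+1 | (j + K <= p + m)%N) 'C(m, j))
          (\sum_(0 <= j < m.+1 | (p + m < j + K)%N) 'C(m, j))))%N.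
Proof.
move=> hnm hm hK hE.
set E := (2 * K - (n + m))%N in hE.
have hB := @claimB n m E hnm ltac:(lia) hE.
set G := (\sum_(0 <= p < n.+1 | goodp n m E p) 'C(n, p))%N in hB.
have hp : forall p, goodp n m E p -> (2 ^ m <= 20 * minn
     (\sum_(0 <= j < m.+1 | (j + K <= p + m)%N) 'C(m, j))
     (\sum_(0 <= j < m.+1 | (p + m < j + K)%N) 'C(m, j)))%N.
  move=> p; rewrite /goodp => hg.
  have [h1 h2] := @claimA' m ((2 * p)%:Z - n%:Z - E%:Z) hm hg.
  have e1 : (\sum_(0 <= j < m.+1 | (j + K <= p + m)%N) 'C(m, j) =
     \sum_(0 <= j < m.+1 | ((2 * j)%:Z - m%:Z <= (2 * p)%:Z - n%:Z - E%:Z)%R) 'C(m, j))%N.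
    apply: eq_bigl => j; apply/idP/idP => H; rewrite /E in H *; lia.
  have e2 : (\sum_(0 <= j < m.+1 | (p + m < j + K)%N) 'C(m, j) =
     \sum_(0 <= j < m.+1 | ((2 * p)%:Z - n%:Z - E%:Z < (2 * j)%:Z - m%:Z)%R) 'C(m, j))%N.
    apply: eq_bigl => j; apply/idP/idP => H; rewrite /E in H *; lia.
  rewrite e1 e2 minnMr leq_min; apply/andP; split => //.
have : (2 ^ m * G <= 20 * \sum_(0 <= p < n.+1) ('C(n, p) *
     minn (\sum_(0 <= j < m.+1 | (j + K <= p + m)%N) 'C(m, j))
          (\sum_(0 <= j < m.+1 | (p + m < j + K)%N) 'C(m, j))))%N.
  rewrite /G big_distrr big_distrr /=.
  apply: (@leq_trans (\sum_(0 <= p < n.+1 | goodp n m E p) (20 * ('C(n, p) *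
     minn (\sum_(0 <= j < m.+1 | (j + K <= p + m)%N) 'C(m, j))
          (\sum_(0 <= j < m.+1 | (p + m < j + K)%N) 'C(m, j)))))%N).
    apply: leq_sum => p hgp.
    rewrite mulnCA mulnC; rewrite leq_mul2l; apply/orP; right; exact: hp.
  exact: sum_sub.
move=> H; rewrite expnD.
apply: (@leq_trans (50 * (2 ^ m * G))%N); last lia.
have -> : (50 * (2 ^ m * G) = (50 * G) * 2 ^ m)%N by ring.
by rewrite leq_mul2r hB orbT.
Qed.
End Aux.

Module Comb.
Import ssrnat all_order all_algebra zify ring.
Set Implicit Arguments. Unset Strict Implicit.

Definition Ts (A : finType) (s : cube A) : {set A} := [set i | s i].
Definition Xs (A : finType) (x : cube A) : {set A} := [set i | x i].
Definition PP (A : finType) (s x : cube A) : nat := #|~: Ts s :&: Xs x|.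
Definition QQ (A : finType) (s x : cube A) : nat := #|Ts s :&: Xs x|.

Lemma hw_split (A : finType) (s x : cube A) :
  hweight (xorc x s) = (PP s x + (#|Ts s| - QQ s x))%N.
Proof.
rewrite /hweight /PP /QQ.
set S := [set i | xorc x s i].
rewrite -(cardsID (Ts s) S).
have e1 : S :&: Ts s = Ts s :\: Xs x.
  by apply/setP => i; rewrite !inE /xorc ffunE; case: (s i); case: (x i).
have e2 : S :\: Ts s = ~: Ts s :&: Xs x.
  by apply/setP => i; rewrite !inE /xorc ffunE; case: (s i); case: (x i).
rewrite e1 e2 addnC; congr (_ + _)%N.
have := cardsID (Xs x) (Ts s); lia.
Qed.

Definition set_of (A : finType) (x : cube A) : {set A} := Xs x.
Definition fun_of (A : finType) (B : {set A}) : cube A := [ffun i => i \in B].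

Lemma set_funK (A : finType) : cancel (@set_of A) (@fun_of A).
Proof. by move=> x; apply/ffunP => i; rewrite ffunE inE. Qed.
Lemma fun_setK (A : finType) : cancel (@fun_of A) (@set_of A).
Proof. by move=> B; apply/setP => i; rewrite inE ffunE. Qed.

Lemma card_cube_sets (A : finType) (P : pred {set A}) :
  #|[set x : cube A | P (Xs x)]| = #|[set B | P B]|.
Proof.
rewrite -(card_imset _ (can_inj (@set_funK A))).
congr (#|pred_of_set _|); apply/setP => B; rewrite inE.
apply/imsetP/idP.
  by move=> [x]; rewrite inE => hx ->.
move=> hB; exists (fun_of B); last by rewrite fun_setK.
by rewrite inE -/(set_of _) fun_setK.
Qed.

Lemma card_split_sets (A : finType) (T : {set A}) (p j : nat) :
  #|[set B : {set A} | (#|~: T :&: B| == p) && (#|T :&: B| == j)]| =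
  ('C(#|~: T|, p) * 'C(#|T|, j))%N.
Proof.
rewrite -!cards_draws -cardsX.
pose f (B : {set A}) := (~: T :&: B, T :&: B).
have finj : {in [set B : {set A} | (#|~: T :&: B| == p) && (#|T :&: B| == j)] &, injective f}.
  move=> B1 B2 _ _ [e1 e2].
  apply/setP => i; move/setP/(_ i): e1; move/setP/(_ i): e2.
  by rewrite !inE; case: (i \in T) => /=.
rewrite -(card_in_imset finj).
congr (#|pred_of_set _|); apply/setP => [[B1 B2]].
rewrite !inE /=.
apply/imsetP/idP.
  move=> [B]; rewrite inE => /andP[/eqP h1 /eqP h2] [-> ->].
  by rewrite subsetIl subsetIl h1 h2 !eqxx.
move=> /andP[/andP[s1 c1] /andP[s2 c2]].
exists (B1 :|: B2).
  rewrite inE.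
  have -> : ~: T :&: (B1 :|: B2) = B1.
    apply/setP => i; rewrite !inE; case hB1: (i \in B1); case hB2: (i \in B2) => /=.
    - by have := subsetP s1 i hB1; rewrite inE => ->.
    - by have := subsetP s1 i hB1; rewrite inE => ->.
    - by have := subsetP s2 i hB2 => ->.
    - by rewrite andbF.
  have -> : T :&: (B1 :|: B2) = B2.
    apply/setP => i; rewrite !inE; case hB1: (i \in B1); case hB2: (i \in B2) => /=.
    - by have := subsetP s2 i hB2 => ->.
    - by have := subsetP s1 i hB1; rewrite inE => /negbTE ->.
    - by have := subsetP s2 i hB2 => ->.
    - by rewrite andbF.
  by rewrite c1 c2.
rewrite /f; congr pair; apply/setP => i; rewrite !inE.
- case hB1: (i \in B1); case hB2: (i \in B2) => /=.
  + by have := subsetP s1 i hB1; rewrite inE => ->.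
  + by have := subsetP s1 i hB1; rewrite inE => ->.
  + by have := subsetP s2 i hB2 => ->.
  + by rewrite andbF.
- case hB1: (i \in B1); case hB2: (i \in B2) => /=.
  + by have := subsetP s2 i hB2 => ->.
  + by have := subsetP s1 i hB1; rewrite inE => /negbTE ->.
  + by have := subsetP s2 i hB2 => ->.
  + by rewrite andbF.
Qed.

Lemma card_L (A : finType) (s : cube A) (p j : nat) :
  #|[set x : cube A | (PP s x == p) && (QQ s x == j)]| =
  ('C(#|~: Ts s|, p) * 'C(#|Ts s|, j))%N.
Proof.
rewrite -card_split_sets -(card_cube_sets (fun B => (#|~: Ts s :&: B| == p) && (#|Ts s :&: B| == j))).
by [].
Qed.

Definition fl (A : finType) (x : cube A) (i : A) : cube A :=
  [ffun k => if k == i then ~~ x i else x k].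

Definition phi (A : finType) (u : cube A * A) : cube A * A := (fl u.1 u.2, u.2).

Lemma phiK (A : finType) : involutive (@phi A).
Proof.
move=> [x i]; rewrite /phi /=; congr pair; apply/ffunP => k; rewrite !ffunE.
by case: eqP => [->|_]; rewrite ?eqxx ?negbK.
Qed.

Lemma Xs_fl (A : finType) (x : cube A) i : ~~ x i -> Xs (fl x i) = i |: Xs x.
Proof.
move=> hx; apply/setP => k; rewrite !inE ffunE.
by case: eqP => [->|_]; rewrite ?hx.
Qed.

Definition Nset (A : finType) (s : cube A) (g : cube A -> bool) (p j : nat) : {set cube A} :=
  [set x | (PP s x == p) && (QQ s x == j) && g x].

Lemma card_pairs (A : finType) (S : {set cube A}) (Q : cube A -> A -> bool) (c : nat) :
  (forall x, x \in S -> #|[set i | Q x i]| = c) ->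
  #|[set u : cube A * A | (u.1 \in S) && Q u.1 u.2]| = (#|S| * c)%N.
Proof.
move=> H.
rewrite -sum1_card.
have -> : (\sum_(u in [set u : cube A * A | (u.1 \in S) && Q u.1 u.2]) 1 =
           \sum_(x in S) \sum_(i | Q x i) 1)%N.
  rewrite pair_big_dep /=; apply: eq_bigl => [[x i]]; by rewrite inE.
rewrite -sum_nat_const; apply: eq_bigr => x hx.
by rewrite sum1_card -(H x hx); apply: eq_card => i; rewrite inE.
Qed.

Lemma lym (A : finType) (s : cube A) (g : cube A -> bool) (p j : nat) :
  monotone g ->
  ((#|Ts s| - j) * #|Nset s g p j| <= j.+1 * #|Nset s g p j.+1|)%N.
Proof.
move=> mg.
set P1 := [set u : cube A * A | (u.1 \in Nset s g p j) && ((u.2 \in Ts s) && ~~ u.1 u.2)].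
set P2 := [set u : cube A * A | (u.1 \in Nset s g p j.+1) && ((u.2 \in Ts s) && u.1 u.2)].
have c1 : #|P1| = (#|Nset s g p j| * (#|Ts s| - j))%N.
  apply: (@card_pairs A _ (fun x i => (i \in Ts s) && ~~ x i)) => x; rewrite inE => /andP[/andP[_ /eqP hq] _].
  have -> : [set i | (i \in Ts s) && ~~ x i] = Ts s :\: Xs x.
    by apply/setP => i; rewrite !inE andbC.
  rewrite -hq /QQ; have := cardsID (Xs x) (Ts s); lia.
have c2 : #|P2| = (#|Nset s g p j.+1| * j.+1)%N.
  apply: (@card_pairs A _ (fun x i => (i \in Ts s) && x i)) => x; rewrite inE => /andP[/andP[_ /eqP hq] _].
  rewrite -hq /QQ; apply: eq_card => i; by rewrite !inE.
have sub : (@phi A) @: P1 \subset P2.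
  apply/subsetP => v /imsetP[[x i] hu ->].
  move: hu; rewrite inE /= => /andP[]; rewrite inE => /andP[/andP[/eqP hp /eqP hq] hg] /andP[hi hxi].
  rewrite inE /= ffunE eqxx hxi andbT hi andbT inE.
  have hX := Xs_fl hxi.
  apply/andP; split; first (apply/andP; split).
  - rewrite /PP hX -hp; apply/eqP; congr (#|pred_of_set _|).
    apply/setP => k; rewrite !inE; case: eqP => [->|]; last by rewrite orFb.
    by move: hi; rewrite inE => ->.
  - rewrite /QQ hX setIUr -hq.
    have -> : Ts s :&: [set i] = [set i] by apply/setIidPr; rewrite sub1set.
    by rewrite cardsU1 in_setI /Xs inE (negbTE hxi) andbF /= add1n.
  - have hm : forall k, x k ==> fl x i k.
      move=> k; rewrite ffunE; case: eqP => [->|_]; by [rewrite (negbTE hxi) | rewrite implybb].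
    exact: (implyP (mg _ _ hm) hg).
have := subset_leq_card sub.
rewrite card_imset; last exact: (inv_inj (@phiK A)).
rewrite c1 c2 mulnC [X in (_ <= X)%N]mulnC //.
Qed.

Lemma ratio_chain (m : nat) (L N : nat -> nat) :
  (forall j, (j < m)%N -> (N j * L j.+1 <= N j.+1 * L j)%N) -> (forall j, (j <= m)%N -> (0 < L j)%N) ->
  forall a d, (a + d <= m)%N -> (N a * L (a + d) <= N (a + d) * L a)%N.
Proof.
move=> hr hL a d; elim: d => [|d IH] had; first by rewrite addn0.
have h1 := IH ltac:(lia).
have h2 := hr (a + d)%N ltac:(lia).
rewrite addnS.
have hp : (0 < L (a + d))%N by apply: hL; lia.
rewrite -(leq_pmul2r hp).
apply: (@leq_trans (N (a + d) * L a * L (a + d).+1)%N).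
  have -> : (N a * L (a + d).+1 * L (a + d) = (N a * L (a + d)) * L (a + d).+1)%N by ring.
  by rewrite leq_mul2r h1 orbT.
have -> : (N (a + d) * L a * L (a + d).+1 = (N (a + d) * L (a + d).+1) * L a)%N by ring.
have -> : (N (a + d).+1 * L a * L (a + d) = (N (a + d).+1 * L (a + d)) * L a)%N by ring.
by rewrite leq_mul2r h2 orbT.
Qed.

Lemma fiber_min (m k : nat) (L N : nat -> nat) :
  (forall j, (N j <= L j)%N) ->
  (forall j, (j < m)%N -> (N j * L j.+1 <= N j.+1 * L j)%N) ->
  (forall j, (j <= m)%N -> (0 < L j)%N) ->
  (minn (\sum_(0 <= j < m.+1 | (j < k)%N) L j) (\sum_(0 <= j < m.+1 | (k <= j)%N) L j) <=
   \sum_(0 <= j < m.+1 | (j < k)%N) (L j - N j) + \sum_(0 <= j < m.+1 | (k <= j)%N) N j)%N.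
Proof.
move=> hNL hr hL.
have rc := ratio_chain hr hL.
case: (ltnP m k) => hk.
  have -> : (\sum_(0 <= j < m.+1 | (k <= j)%N) L j = 0)%N.
    by rewrite big_nat_cond big_pred0 // => j; lia.
  by rewrite minn0.
have hLk : (0 < L k)%N by apply: hL.
rewrite -(leq_pmul2l hLk) mulnDr !big_distrr /=.
set Lo := (\sum_(0 <= j < m.+1 | (j < k)%N) L j)%N.
set Hi := (\sum_(0 <= j < m.+1 | (k <= j)%N) L j)%N.
apply: (@leq_trans ((L k - N k) * Lo + N k * Hi)%N).
  have -> : (L k * minn Lo Hi = (L k - N k) * minn Lo Hi + N k * minn Lo Hi)%N.
    by rewrite -mulnDl subnK.
  apply: leq_add; rewrite leq_mul2l; apply/orP; right; [exact: geq_minl | exact: geq_minr].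
apply: leq_add.
  rewrite /Lo big_distrr /= big_nat_cond [X in (_ <= X)%N]big_nat_cond.
  apply: leq_sum => j /andP[/andP[_ hj] hjk].
  rewrite mulnBr mulnBl leq_sub2l //.
  have := rc j (k - j)%N ltac:(lia).
  have -> : (j + (k - j) = k)%N by lia.
  by rewrite mulnC.
rewrite /Hi big_distrr /= big_nat_cond [X in (_ <= X)%N]big_nat_cond.
apply: leq_sum => j /andP[/andP[_ hj] hjk].
have := rc k (j - k)%N ltac:(lia).
have -> : (k + (j - k) = j)%N by lia.
by rewrite [X in (_ <= X)%N -> _]mulnC.
Qed.

Lemma card_part (X : finType) (h : X -> nat) (N : nat) (P : pred X) :
  (forall x, (h x <= N)%N) ->
  #|[set x | P x]| = (\sum_(0 <= k < N.+1) #|[set x | P x && (h x == k)]|)%N.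
Proof.
move=> hN; rewrite big_mkord.
rewrite -sum1_card (partition_big (fun x => (inord (h x) : 'I_N.+1)) predT) //=.
apply: eq_bigr => k _; rewrite -sum1_card; apply: eq_bigl => x; rewrite !inE.
by rewrite -val_eqE /= inordK // ltnS.
Qed.

Lemma PP_le (A : finType) (s x : cube A) : (PP s x <= #|~: Ts s|)%N.
Proof. by apply: subset_leq_card; apply: subsetIl. Qed.
Lemma QQ_le (A : finType) (s x : cube A) : (QQ s x <= #|Ts s|)%N.
Proof. by apply: subset_leq_card; apply: subsetIl. Qed.

Lemma comb_bound (A : finType) (s : cube A) (K : nat) (g : cube A -> bool) : monotone g ->
  (\sum_(0 <= p < #|~: Ts s|.+1) ('C(#|~: Ts s|, p) *
     minn (\sum_(0 <= j < #|Ts s|.+1 | (j + K <= p + #|Ts s|)%N) 'C(#|Ts s|, j))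
          (\sum_(0 <= j < #|Ts s|.+1 | (p + #|Ts s| < j + K)%N) 'C(#|Ts s|, j))) <=
   #|[set x | (K <= PP s x + (#|Ts s| - QQ s x))%N != g x]|)%N.
Proof.
move=> mg.
set m := #|Ts s|; set n := #|~: Ts s|.
rewrite (@card_part _ (PP s) n); last by move=> x; apply: PP_le.
rewrite big_nat_cond [X in (_ <= X)%N]big_nat_cond.
apply: leq_sum => p /andP[/andP[_ hp] _].
rewrite (@card_part _ (QQ s) m); last by move=> x; apply: QQ_le.
pose L j := ('C(n, p) * 'C(m, j))%N.
pose N j := #|Nset s g p j|.
have hF : forall j, #|[set x | (PP s x == p) && (QQ s x == j)]| = L j.
  by move=> j; rewrite card_L.
have term : forall j, (j < m.+1)%N ->
    #|[set x | (((K <= PP s x + (m - QQ s x))%N != g x) && (PP s x == p)) && (QQ s x == j)]| =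
    if (j + K <= p + m)%N then (L j - N j)%N else N j.
  move=> j hj.
  set F := [set x | (PP s x == p) && (QQ s x == j)].
  have hNF : Nset s g p j = F :&: [set x | g x].
    by apply/setP => x; rewrite !inE.
  case: ifP => hc.
  - rewrite -hF /N hNF -(cardsID [set x | g x] F) addKn.
    congr (#|pred_of_set _|); apply/setP => x; rewrite !inE.
    have [hpx|hpx] := eqVneq (PP s x) p; have [hqx|hqx] := eqVneq (QQ s x) j; rewrite ?andbF ?andbT //=.
    have -> : (K <= PP s x + (m - QQ s x))%N by rewrite hpx hqx; lia.
    by case: (g x).
  - rewrite /N; congr (#|pred_of_set _|); apply/setP => x; rewrite !inE.
    have [hpx|hpx] := eqVneq (PP s x) p; have [hqx|hqx] := eqVneq (QQ s x) j; rewrite ?andbF ?andbT //=.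
    have -> : (K <= PP s x + (m - QQ s x))%N = false by rewrite hpx hqx; lia.
    by case: (g x).
rewrite [X in (_ <= X)%N]big_nat_cond.
rewrite [X in (_ <= X)%N](eq_bigr (fun j => if (j + K <= p + m)%N then (L j - N j)%N else N j)); last first.
  by move=> j /andP[/andP[_ hj] _]; apply: term.
rewrite -big_nat_cond [X in (_ <= X)%N](bigID (fun j => (j + K <= p + m)%N)) /=.
rewrite [X in (_ <= X + _)%N](eq_bigr (fun j => (L j - N j)%N)); last by move=> j ->.
rewrite [X in (_ <= _ + X)%N](eq_bigr (fun j => N j)); last by move=> j /negbTE ->.
rewrite minnMr !big_distrr /=.
have hNL : forall j, (N j <= L j)%N.
  move=> j; rewrite /N -hF; apply: subset_leq_card; apply/subsetP => x; rewrite !inE.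
  by case/andP => ->.
have hLpos : forall j, (j <= m)%N -> (0 < L j)%N.
  by move=> j hj; rewrite /L muln_gt0 !bin_gt0 hj -ltnS hp.
have hrat : forall j, (j < m)%N -> (N j * L j.+1 <= N j.+1 * L j)%N.
  move=> j hj; rewrite -(leq_pmul2l (ltn0Sn j)).
  have hl := @lym A s g p j mg; rewrite -/m -/(N j) -/(N j.+1) in hl.
  have hb := mul_bin_left m j.
  have -> : (j.+1 * (N j * L j.+1) = 'C(n, p) * N j * (j.+1 * 'C(m, j.+1)))%N by rewrite /L; ring.
  rewrite hb.
  have -> : ('C(n, p) * N j * ((m - j) * 'C(m, j)) = ('C(n, p) * 'C(m, j)) * ((m - j) * N j))%N by ring.
  have -> : (j.+1 * (N j.+1 * L j) = ('C(n, p) * 'C(m, j)) * (j.+1 * N j.+1))%N by rewrite /L; ring.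
  by rewrite leq_mul2l hl orbT.
have := @fiber_min m (p + m + 1 - K) L N hNL hrat hLpos.
have e1 : forall (F : nat -> nat), (\sum_(0 <= j < m.+1 | (j < p + m + 1 - K)%N) F j =
    \sum_(0 <= j < m.+1 | (j + K <= p + m)%N) F j)%N.
  by move=> F; apply: eq_bigl => j; apply/idP/idP => H; lia.
have e2 : forall (F : nat -> nat), (\sum_(0 <= j < m.+1 | (p + m + 1 - K <= j)%N) F j =
    \sum_(0 <= j < m.+1 | ~~ (j + K <= p + m)%N) F j)%N.
  by move=> F; apply: eq_bigl => j; apply/idP/idP => H; lia.
have e3 : forall (F : nat -> nat), (\sum_(0 <= j < m.+1 | (p + m < j + K)%N) F j =
    \sum_(0 <= j < m.+1 | ~~ (j + K <= p + m)%N) F j)%N.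
  by move=> F; apply: eq_bigl => j; apply/idP/idP => H; lia.
rewrite !e1 !e2 e3.
by [].
Qed.
End Comb.


Module Fin.
Import ssrnat Aux Comb.

Lemma K_spec (th : R) : (0 <= th)%R ->
  exists K : nat, (th < INR K)%R /\ (INR K <= th + 1)%R /\
    forall w : nat, (th < INR w)%R <-> (K <= w)%N.
Proof.
move=> hth.
have [h1 h2] := archimed th.
have hup : (0 < up th)%Z by apply: lt_IZR; lra.
exists (Z.to_nat (up th)).
have eK : INR (Z.to_nat (up th)) = IZR (up th).
  by rewrite INR_IZR_INZ Znat.Z2Nat.id //; lia.
rewrite eK; split; first lra; split; first lra.
move=> w; split => H.
- have : (up th <= Z.of_nat w)%Z.
    case: (ZArith_dec.Z_lt_le_dec (Z.of_nat w) (up th)) => // hlt; exfalso.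
    have : (IZR (Z.of_nat w) <= IZR (up th) - 1)%R.
      rewrite -minus_IZR; apply: IZR_le; lia.
    rewrite -INR_IZR_INZ; lra.
  move=> hle; apply/leP; lia.
- have : (IZR (up th) <= INR w)%R.
    rewrite INR_IZR_INZ; apply: IZR_le; move/leP: H; lia.
  lra.
Qed.

Lemma E_bound (a m K : nat) (c1 : R) : (0 < c1 < 1/100)%R -> (a <= 2 * m)%N -> (1000 <= m)%N ->
  (INR K <= INR a / 2 + c1 * sqrt (INR a) + 1)%R -> (a < 2 * K)%N ->
  (100 * (2 * K - a) ^ 2 <= m)%N.
Proof.
move=> hc ham hm hK haK.
set E := (2 * K - a)%N.
have eE : (E + a = K + K)%coq_nat by rewrite /E; lia.
have e1' : (INR E + INR a = INR K + INR K)%R by rewrite -!plus_INR eE.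
set y := sqrt (INR a).
have hy : (0 <= y)%R by apply: sqrt_pos.
have hy2 : (y * y = INR a)%R by rewrite /y sqrt_sqrt //; apply: pos_INR.
have ham' : (INR a <= 2 * INR m)%R.
  have : (a <= m + m)%coq_nat by lia.
  by move/le_INR; rewrite plus_INR; lra.
have hm' : (1000 <= INR m)%R.
  have : (1000 <= m)%coq_nat by lia.
  move/le_INR; rewrite (@INR_IZR_INZ 1000); by [].
have hE0 : (0 <= INR E)%R by apply: pos_INR.
have hE1 : (INR E <= 2 / 100 * y + 2)%R.
  have : (0 <= (1/100 - c1) * y)%R by apply: Rmult_le_pos; lra.
  rewrite /y in hK *; lra.
have hE2 : (100 * (INR E * INR E) <= INR m)%R.
  have h1 : (INR E * INR E <= (2/100*y+2)*(2/100*y+2))%R by apply: Rmult_le_compat; lra.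
  have h2 := Rle_0_sqr (y - 100); rewrite /Rsqr in h2.
  lra.
have : (100 * (E * E) <= m)%coq_nat.
  apply: INR_le; rewrite !mult_INR (@INR_IZR_INZ 100); exact: hE2.
rewrite /E; move=> h; nia.
Qed.

Lemma core (A : finType) (s : cube A) (c1 : R) : (0 < c1 < 1/100)%R -> (2000 <= #|A|)%N ->
  (#|A| <= 2 * #|Ts s|)%N ->
  forall f : cube A -> bool, (forall x, f x = hm0 c1 (xorc x s)) ->
  forall g, monotone g -> (1/1000 <= fdist f g)%R.
Proof.
move=> hc ha hT f hf g mg.
have hth : (0 <= INR #|A| / 2 + c1 * sqrt (INR #|A|))%R.
  have := pos_INR #|A|; have := sqrt_pos (INR #|A|).
  move=> h1 h2; have : (0 <= c1 * sqrt (INR #|A|))%R by apply: Rmult_le_pos; lra.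
  lra.
have [K [hK1 [hK2 hKw]]] := K_spec _ hth.
have hnm : (#|~: Ts s| + #|Ts s| = #|A|)%N by rewrite addnC cardsC.
have hf' : forall x, f x = (K <= PP s x + (#|Ts s| - QQ s x))%N.
  move=> x; rewrite hf /hm0 -hw_split.
  case: Rlt_dec => h.
    by symmetry; apply/idP; apply/(proj1 (hKw _)).
  by symmetry; apply/negbTE/negP => h'; apply: h; apply/(proj2 (hKw _)).
have hcard : #|[set x | f x != g x]| =
    #|[set x | (K <= PP s x + (#|Ts s| - QQ s x))%N != g x]|.
  by apply: eq_card => x; rewrite !inE hf'.
have hcb := @comb_bound A s K g mg.
have haK : (#|A| < 2 * K)%N.
  have : (INR #|A| < INR (K + K))%R.
    rewrite plus_INR; have := sqrt_pos (INR #|A|).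
    have : (0 <= c1 * sqrt (INR #|A|))%R by apply: Rmult_le_pos; [lra | apply: sqrt_pos].
    lra.
  move/INR_lt => h; lia.
have hE := @E_bound #|A| #|Ts s| K c1 hc hT ltac:(lia) hK2 haK.
rewrite -hnm in hE haK.
have han := @analytic #|~: Ts s| #|Ts s| K ltac:(lia) ltac:(lia) haK hE.
rewrite hnm in han.
have hfin : (2 ^ #|A| <= 1000 * #|[set x | f x != g x]|)%N.
  rewrite hcard; apply: leq_trans han _; rewrite leq_mul2l hcb orbT //.
rewrite /fdist card_ffun card_bool.
set X := #|[set x | f x != g x]| in hfin *.
have hP : (0 < INR (2 ^ #|A|))%R.
  apply: lt_0_INR; apply/ltP; by rewrite expn_gt0.
have hX : (INR (2 ^ #|A|) <= 1000 * INR X)%R.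
  have : (2 ^ #|A| <= 1000 * X)%coq_nat by apply/leP.
  move/le_INR; rewrite mult_INR (@INR_IZR_INZ 1000); by [].
have -> : (1 / 1000 = (INR (2 ^ #|A|) / 1000) / INR (2 ^ #|A|))%R by field; lra.
rewrite /Rdiv; apply: Rmult_le_compat_r; first by apply: Rlt_le; apply: Rinv_0_lt_compat.
lra.
Qed.

Lemma hm1_hm0 (A : finType) (c1 : R) (x r : cube A) :
  hm1 c1 (xorc x r) = hm0 c1 (xorc x [ffun i => ~~ r i]).
Proof.
set r' := [ffun i => ~~ r i].
have hw : (hweight (xorc x r') + hweight (xorc x r) = #|A|)%N.
  rewrite /hweight.
  have -> : [set i | xorc x r' i] = ~: [set i | xorc x r i].
    by apply/setP => i; rewrite !inE /xorc !ffunE; case: (x i); case: (r i).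
  by rewrite addnC cardsC.
have e : (hweight (xorc x r') = #|A| - hweight (xorc x r))%coq_nat by lia.
rewrite /hm1 /hm0 e minus_INR; last by lia.
by case: Rlt_dec => h1; case: Rlt_dec => h2 //; lra.
Qed.

Lemma Ts_neg (A : finType) (r : cube A) : (#|A| <= 2 * #|Ts r|)%N = false ->
  (#|A| <= 2 * #|Ts [ffun i => ~~ r i]|)%N.
Proof.
move=> h.
have -> : Ts [ffun i => ~~ r i] = ~: Ts r by apply/setP => i; rewrite !inE ffunE.
have := cardsC (Ts r); move/negbT: h; rewrite -ltnNge; lia.
Qed.
End Fin.

Theorem mainTheorem7 :
  exists delta : R, (0 < delta)%R /\
  forall c1 : R, (0 < c1 < 1/100)%R ->
  exists a0 : nat, forall (A : finType), (a0 <= #|A|)%N ->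
  forall r : cube A,
    (forall g : cube A -> bool, monotone g ->
       (delta <= fdist (fun x => hm0 c1 (xorc x r)) g)%R) \/
    (forall g : cube A -> bool, monotone g ->
       (delta <= fdist (fun x => hm1 c1 (xorc x r)) g)%R).
Proof.
exists (1/1000)%R; split; first lra.
move=> c1 hc; exists 2000%N => A ha r.
case hT: (#|A| <= 2 * #|Comb.Ts r|)%N.
- left => g mg; exact: (@Fin.core A r c1 hc ha hT _ (fun x => erefl) g mg).
- right => g mg.
  apply: (@Fin.core A [ffun i => ~~ r i] c1 hc ha _ _ _ g mg).
    exact: Fin.Ts_neg hT.
  by move=> x; apply: Fin.hm1_hm0.
Qed.
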